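(* For any $\alpha>0$ there exists $\beta>0$ such that the following holds. Let $\Lambda_1,\dots,\Lambda_m\subseteq\mathbb{R}^d$ be hyperplanes with $b\in\bigcap_{i\in[m]}\Lambda_i$, and let $j$ be the lowest dimension for which the set $V=\{v_1,\dots,v_m\}$ of their unit normal vectors is $(j,\beta^j)$-flat with respect to a $j$-plane $\Lambda_B$ with $b\in\Lambda_B$. Let $S\subseteq\mathbb{R}^d$ and $p\in S$. If $S$ is $(p,d-1,\beta^d)$-flat with respect to $\Lambda_i$ for every $i\in[m]$, then $S$ is $(p,d-j,\alpha)$-flat with respect to $\Lambda:=\Lambda_B(b)^{\perp}$.
   Context: A $j$-plane is an affine subspace of dimension $j$. The angle between a vector $v$ and a plane $\Lambda$ is the infimum of the angles between $v$ and vectors $w\in\Lambda-\Lambda$. A set of vectors $V$ is $(j,\alpha)$-flat with respect to a $j$-plane $\Lambda$ if every $v\in V$ makes angle at most $\alpha$ with $\Lambda$. A set $S$ is $(p,j,\alpha)$-flat with respect to a $j$-plane $\Lambda$ (for $p\in S$) if $\{p-q:q\in S\}$ is $(j,\alpha)$-flat with respect to $\Lambda$. For a $j$-plane $\gamma\subseteq\mathbb{R}^d$ and $p\in\gamma$, $\gamma(p)^{\perp}$ is the $(d-j)$-plane through $p$ orthogonal to $\gamma$. *)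

(* Defs.v *)
From HB Require Import structures.
From mathcomp Require Import all_boot all_order all_algebra.
From mathcomp Require Import all_classical all_reals.
From mathcomp Require Import ereal trigo.
Set Implicit Arguments. Unset Strict Implicit. Unset Printing Implicit Defensive.
Import Order.TTheory GRing.Theory Num.Theory.
Local Open Scope classical_set_scope.
Local Open Scope ring_scope.

Section Defs.
Variables (R : realType) (d : nat).
Notation vec := 'rV[R]_d.

Definition dotp (u v : vec) : R := (u *m v^T) 0 0.
Definition enorm (u : vec) : R := Num.sqrt (dotp u u).

Definition vangle (u w : vec) : R := acos (dotp u w / (enorm u * enorm w)).

Definition is_plane (j : nat) (L : set vec) : Prop :=
  exists (a : vec) (U : 'M[R]_d), \rank U = j /\ L = [set x | (x - a <= U)%MS].

Definition diffset (L : set vec) : set vec :=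
  [set x - y | x in L & y in L].

(* angle between v and the plane L: infimum of angles between v and the
   nonzero w in L - L (infimum of an empty set is +oo) *)
Definition angle_plane (v : vec) (L : set vec) : \bar R :=
  ereal_inf [set (vangle v w)%:E | w in diffset L `\ 0].

(* V is (j,alpha)-flat w.r.t. the j-plane L; the zero vector makes angle 0
   with everything (convention) *)
Definition vflat (j : nat) (alpha : R) (V : set vec) (L : set vec) : Prop :=
  is_plane j L /\ forall v, V v -> v = 0 \/ (angle_plane v L <= alpha%:E)%E.

Definition sflat (p : vec) (j : nat) (alpha : R) (S : set vec) (L : set vec)
  : Prop := vflat j alpha [set p - q | q in S] L.

Definition perp_plane (L : set vec) (p : vec) : set vec :=
  [set x | forall w, diffset L w -> dotp (x - p) w = 0].

End Defs.

(* Main.v *)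
Require Import Defs.
From HB Require Import structures.
From mathcomp Require Import all_boot all_order all_algebra.
From mathcomp Require Import all_classical all_reals.
From mathcomp Require Import ereal trigo topology normedtype derive.
From mathcomp Require Import ring lra zify.
Import Order.TTheory GRing.Theory Num.Theory numFieldNormedType.Exports.
Local Open Scope classical_set_scope.
Local Open Scope ring_scope.

Section Trig.
Context {R : realType}.
Implicit Types x y : R.

Lemma sin_MVT x : 0 <= x -> exists2 c, 0 <= c <= x & sin x = cos c * x.
Proof.
move=> x0.
have [|c cI E] := @MVT_segment R sin cos 0 x x0.
- exact/continuous_subspaceT/continuous_sin.
exists c; first by move: cI; rewrite in_itv.
by move: E; rewrite sin0 subr0 subr0.
Qed.

Lemma abs_sin_le x : 0 <= x -> `|sin x| <= x.
Proof.
move=> x0; have [c _ ->] := sin_MVT _ x0.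
by rewrite normrM (ger0_norm x0) ler_piMl // cos_max.
Qed.

Lemma sin2_le x : 0 <= x -> sin x ^+ 2 <= x ^+ 2.
Proof.
move=> x0; have := abs_sin_le _ x0; rewrite ler_norml => /andP[h1 h2].
have h3 : 0 <= (x - sin x) * (x + sin x) by apply: mulr_ge0; lra.
nra.
Qed.

Lemma cos_lb x : 0 <= x -> 1 - x ^+ 2 / 2 <= cos x.
Proof.
move=> x0.
have e : cos x = 2 * (1 - sin (x / 2) ^+ 2) - 1.
  rewrite -cos2sin2 mulr_natl -cos_mulr2n; congr cos; lra.
have := sin2_le _ (divr_ge0 x0 (ler0n _ 2)).
rewrite e; set s := sin _ ^+ 2; move=> h.
have e2 : (x / 2) ^+ 2 = x ^+ 2 / 4 by rewrite expr_div_n; congr (_ / _); rewrite expr2 -natrM.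
lra.
Qed.

Lemma sin_lb x : 0 <= x <= 1 -> x / 2 <= sin x.
Proof.
move=> /andP[x0 x1]; have [c /andP[c0 cx] ->] := sin_MVT _ x0.
have := cos_lb _ c0.
have : c ^+ 2 <= 1 by rewrite expr_le1 //; apply: le_trans x1.
nra.
Qed.

Lemma ler_cos_pi x y : 0 <= x <= pi -> 0 <= y <= pi -> (cos y <= cos x) = (x <= y).
Proof.
move=> hx hy; rewrite !leNgt; congr (~~ _).
by rewrite ltr_cos // in_itv /=.
Qed.

Lemma acos_le_iff (q t : R) : -1 <= q <= 1 -> 0 <= t <= pi -> (acos q <= t) = (cos t <= q).
Proof.
move=> hq ht; rewrite -ler_cos_pi ?acosK ?in_itv //=.
by rewrite acos_ge0 // acos_lepi.
Qed.

End Trig.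
Section Vec.
Context {R : realType} {d : nat}.
Notation vec := 'rV[R]_d.
Implicit Types u v w y z : vec.

Lemma dotpE u v : dotp u v = \sum_i u 0 i * v 0 i.
Proof. by rewrite /dotp mxE; apply: eq_bigr => i _; rewrite mxE. Qed.

Lemma dotpC u v : dotp u v = dotp v u.
Proof. by rewrite !dotpE; apply: eq_bigr => i _; rewrite mulrC. Qed.

Lemma dotpDl u w v : dotp (u + w) v = dotp u v + dotp w v.
Proof. by rewrite /dotp mulmxDl mxE. Qed.

Lemma dotpZl a u v : dotp (a *: u) v = a * dotp u v.
Proof. by rewrite /dotp -scalemxAl mxE. Qed.

Lemma dotpNl u v : dotp (- u) v = - dotp u v.
Proof. by rewrite -scaleN1r dotpZl mulN1r. Qed.

Lemma dotpBl u w v : dotp (u - w) v = dotp u v - dotp w v.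
Proof. by rewrite dotpDl dotpNl. Qed.

Lemma dotpDr u w v : dotp v (u + w) = dotp v u + dotp v w.
Proof. by rewrite dotpC dotpDl !(dotpC v). Qed.

Lemma dotpZr a u v : dotp v (a *: u) = a * dotp v u.
Proof. by rewrite dotpC dotpZl dotpC. Qed.

Lemma dotpBr u w v : dotp v (u - w) = dotp v u - dotp v w.
Proof. by rewrite dotpC dotpBl !(dotpC v). Qed.

Lemma dotp0l v : dotp 0 v = 0.
Proof. by rewrite -(scale0r 0) dotpZl mul0r. Qed.

Lemma dotp0r v : dotp v 0 = 0.
Proof. by rewrite dotpC dotp0l. Qed.

Lemma dotpp u : dotp u u = \sum_i u 0 i ^+ 2.
Proof. by rewrite dotpE; apply: eq_bigr => i _; rewrite expr2. Qed.

Lemma dotp_ge0 u : 0 <= dotp u u.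
Proof. by rewrite dotpp; apply: sumr_ge0 => i _; apply: sqr_ge0. Qed.

Lemma dotp_eq0 {u} : dotp u u = 0 -> u = 0.
Proof.
rewrite dotpp => h; apply/matrixP => i k; rewrite ord1 mxE.
have := @psumr_eq0P _ _ xpredT (fun k => u 0 k ^+ 2) (fun k _ => sqr_ge0 (u 0 k)) h k isT.
by move/eqP; rewrite sqrf_eq0 => /eqP.
Qed.

Lemma dotp_gt0 {u} : u != 0 -> 0 < dotp u u.
Proof.
move=> u0; rewrite lt_def dotp_ge0 andbT; apply/eqP => /dotp_eq0 /eqP.
by rewrite (negbTE u0).
Qed.

Lemma enorm_sq u : enorm u ^+ 2 = dotp u u.
Proof. by rewrite /enorm sqr_sqrtr // dotp_ge0. Qed.

Lemma enorm_ge0 u : 0 <= enorm u.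
Proof. exact: sqrtr_ge0. Qed.

Lemma CS2 u w : dotp u w ^+ 2 <= dotp u u * dotp w w.
Proof.
have [w0|w0] := eqVneq w 0.
  by rewrite w0 dotp0r dotp0l expr0n /= mulr0.
have a0 := dotp_gt0 w0.
have h := dotp_ge0 (dotp w w *: u - dotp u w *: w).
rewrite !(dotpBl, dotpBr, dotpZl, dotpZr) (dotpC w u) in h.
set a := dotp w w in h a0 *; set b := dotp u w in h *; set c := dotp u u in h *.
have : 0 <= a * (a * c - b ^+ 2) by nra.
by rewrite pmulr_rge0 // subr_ge0 => /le_trans; apply; rewrite mulrC.
Qed.

Lemma CS u w : `|dotp u w| <= enorm u * enorm w.
Proof.
rewrite /enorm -sqrtrM ?dotp_ge0 // -sqrtr_sqr ler_sqrt ?CS2 //.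
by apply: mulr_ge0; apply: dotp_ge0.
Qed.

Lemma CS_le u w : dotp u w <= enorm u * enorm w.
Proof. exact: le_trans (ler_norm _) (CS u w). Qed.

Lemma mx11_dotp u w : u *m w^T = (dotp u w)%:M.
Proof. exact: mx11_scalar. Qed.

Lemma subB_sub m (U : 'M[R]_(m, d)) u w : (u <= U)%MS -> (w <= U)%MS -> (u - w <= U)%MS.
Proof. by move=> hu hw; rewrite addmx_sub // -scaleN1r scalemx_sub. Qed.

Lemma diffsetP (a : vec) (U : 'M[R]_d) w :
  diffset [set x | (x - a <= U)%MS] w <-> (w <= U)%MS.
Proof.
split.
  case=> x hx [y hy <-]; have -> : x - y = (x - a) - (y - a) by rewrite opprB addrA subrK.
  exact: subB_sub.
move=> hw; exists (a + w); first by rewrite /= addrC addKr.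
by exists a; rewrite /= ?subrr ?sub0mx // addrC addKr.
Qed.

Lemma orth_dotp {U : 'M[R]_d} {y w} : y *m U^T = 0 -> (w <= U)%MS -> dotp y w = 0.
Proof.
move=> hy /mulmxKpV <-; rewrite /dotp trmx_mul mulmxA hy mul0mx mxE.
by [].
Qed.

Lemma orth_of_dotp (U : 'M[R]_d) y :
  (forall w, (w <= U)%MS -> dotp y w = 0) -> y *m U^T = 0.
Proof.
move=> h; apply/matrixP => i k; rewrite ord1 [RHS]mxE.
rewrite -(h _ (row_sub k U)) /dotp !mxE; apply: eq_bigr => l _; rewrite !mxE.
by [].
Qed.

Lemma decomp (U : 'M[R]_d) y :
  exists yB yP, [/\ y = yB + yP, (yB <= U)%MS & yP *m U^T = 0].
Proof.
pose K := kermx (trmx U).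
have capK : (U :&: K <= (0 : 'M_d))%MS.
  apply/row_subP => i; rewrite submx0; apply/eqP.
  have := row_sub i (U :&: K)%MS; rewrite sub_capmx => /andP[h1 /sub_kermxP h2].
  by apply: dotp_eq0; apply: orth_dotp h2 h1.
have rc : \rank (U :&: K)%MS = 0%N.
  by apply/eqP; rewrite mxrank_eq0 -submx0.
have rs := mxrank_sum_cap U K.
rewrite rc mxrank_ker mxrank_tr addn0 in rs.
have full : row_full (U + K)%MS.
  by rewrite /row_full rs subnKC // rank_leq_col.
have := submx_full y full; case/sub_addsmxP => -[a b] /= ->.
exists (a *m U), (b *m K); split => //; first exact: submxMl.
by rewrite -mulmxA mulmx_ker mulmx0.
Qed.

Lemma rank_cap_line {U : 'M[R]_d} {x : vec} : (x <= U)%MS -> x != 0 ->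
  \rank (U :&: kermx x^T)%MS = (\rank U).-1.
Proof.
move=> xU x0.
pose K := kermx (trmx x).
have full : (1%:M <= U + K)%MS.
  apply/row_subP => i; set z := row i 1%:M.
  set c := dotp z x / dotp x x.
  have -> : z = c *: x + (z - c *: x) by rewrite addrC subrK.
  apply: addmx_sub_adds; first exact: scalemx_sub.
  apply/sub_kermxP; rewrite mx11_dotp dotpBl dotpZl /c divfK.
    by rewrite subrr raddf0.
  by rewrite gt_eqF // dotp_gt0.
have rs := mxrank_sum_cap U K.
have r1 : \rank (U + K)%MS = d.
  apply/eqP; rewrite eqn_leq rank_leq_col /=.
  by have := mxrankS full; rewrite mxrank1.
rewrite r1 /K mxrank_ker mxrank_tr rank_rV x0 in rs.
have : (0 < \rank U)%N.
  by rewrite lt0n mxrank_eq0; apply: contraNneq x0 => U0; move: xU; rewrite U0 submx0.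
have := rank_leq_col U.
lia.
Qed.


Lemma enorm_gt0 {u} : u != 0 -> 0 < enorm u.
Proof. by move=> u0; rewrite /enorm sqrtr_gt0 dotp_gt0. Qed.

Lemma ratio_bounds {u w} : u != 0 -> w != 0 ->
  -1 <= dotp u w / (enorm u * enorm w) <= 1.
Proof.
move=> u0 w0; have p := mulr_gt0 (enorm_gt0 u0) (enorm_gt0 w0).
have := CS u w; rewrite ler_norml => /andP[h1 h2].
by rewrite ler_pdivlMr // ler_pdivrMr // mulN1r mul1r h1 h2.
Qed.

Lemma angle_le_bound z e (L : set vec) (t : R) :
  0 <= t <= pi -> (forall w, diffset L w -> dotp z w = dotp e w) ->
  (angle_plane z L <= t%:E)%E -> cos t * enorm z <= enorm e.
Proof.
move=> ht hze hang; rewrite leNgt; apply/negP => H.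
have e0 := enorm_ge0 e; have z0 := enorm_ge0 z.
have ct1 := cos_le1 t.
have nz : 0 < enorm z.
  rewrite lt_def z0 andbT; apply/eqP => E; move: H; rewrite E mulr0; lra.
set q0 := enorm e / enorm z.
have q0lt : q0 < cos t by rewrite /q0 ltr_pdivrMr.
have q00 : 0 <= q0 by rewrite divr_ge0.
have q0I : -1 <= q0 <= 1 by apply/andP; split; lra.
have : ((acos q0)%:E <= angle_plane z L)%E.
  apply: le_ereal_inf_tmp => _ [w [hw hw0] <-].
  have w0 : w != 0 by apply/eqP.
  have zz : z != 0 by apply/eqP => E; move: nz; rewrite E /enorm dotp0l sqrtr0 ltxx.
  rewrite lee_fin /vangle.
  have qI := ratio_bounds zz w0.
  rewrite acos_le_iff //; last by rewrite acos_ge0 // acos_lepi.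
  rewrite acosK ?in_itv //= hze // /q0.
  have nw := enorm_gt0 w0.
  rewrite ler_pdivrMr ?mulr_gt0 // mulrA divfK ?gt_eqF //.
  exact: CS_le.
move=> /le_trans /(_ hang); rewrite lee_fin acos_le_iff //; lra.
Qed.

Lemma angle_gt_bound z w (L : set vec) (u : R) :
  z != 0 -> w != 0 -> diffset L w -> 0 <= u <= pi ->
  ~ (angle_plane z L <= u%:E)%E -> dotp z w < cos u * (enorm z * enorm w).
Proof.
move=> z0 w0 hw hu hang; rewrite ltNge; apply/negP => H; apply: hang.
apply: le_trans (ereal_inf_lbound _) _; first by exists w => //; split => //; apply/eqP.
rewrite lee_fin /vangle acos_le_iff ?ratio_bounds //.
by rewrite ler_pdivlMr // mulr_gt0 // enorm_gt0.
Qed.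

End Vec.

Theorem corollary1 (R : realType) (alpha : R) (halpha : 0 < alpha) :
  exists2 beta : R, 0 < beta &
  forall (d m : nat) (Lam : 'I_m -> set 'rV[R]_d) (b : 'rV[R]_d)
         (v : 'I_m -> 'rV[R]_d) (j : nat) (LamB : set 'rV[R]_d)
         (S : set 'rV[R]_d) (p : 'rV[R]_d),
    (0 < d)%N ->
    (forall i, is_plane d.-1 (Lam i)) ->
    (forall i, Lam i b) ->
    (* v i is a unit normal vector of Lam i *)
    (forall i, enorm (v i) = 1) ->
    (forall i w, diffset (Lam i) w -> dotp (v i) w = 0) ->
    (* j is the lowest dimension for which V is (j, beta^j)-flat w.r.t. a
       j-plane through b, and LamB is such a j-plane *)
    vflat j (beta ^+ j) (range v) LamB -> LamB b ->
    (forall (j' : nat) (L : set 'rV[R]_d), (j' < j)%N -> L b ->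
       ~ vflat j' (beta ^+ j') (range v) L) ->
    S p ->
    (forall i, sflat p d.-1 (beta ^+ d) S (Lam i)) ->
    sflat p (d - j) alpha S (perp_plane LamB b).
Proof.
pose a' := Num.min alpha 1.
have a'0 : 0 < a' by rewrite lt_min halpha ltr01.
have a'1 : a' <= 1 by rewrite ge_min lexx orbT.
have a'a : a' <= alpha by rewrite ge_min lexx.
pose beta := a' / 12.
have b0 : 0 < beta by rewrite divr_gt0.
have beq : a' = 12 * beta by rewrite /beta mulrC divfK // pnatr_eq0.
have b1 : beta <= 1 / 12 by lra.
exists beta => // d m Lam b v j LamB S p hd hLam hLb hvn hvo
  [[a [U [rU eLB]]] hflB] hLBb hmin hSp hS.
subst LamB.
pose K := kermx (trmx U).
have perpE : perp_plane [set x | (x - a <= U)%MS] b = [set x | (x - b <= K)%MS].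
  apply/seteqP; split => x; rewrite /perp_plane /=.
  - move=> h; apply/sub_kermxP; apply: orth_of_dotp => w hw.
    by apply: h; exact: (proj2 (diffsetP a U w) hw).
  - by move=> /sub_kermxP h w hw; exact: orth_dotp h (proj1 (diffsetP a U w) hw).
rewrite perpE; split.
  by exists b, K; split => //; rewrite /K mxrank_ker mxrank_tr rU.
move=> _ [q hq <-]; set z := p - q.
have hzS : [set p - q | q in S] z by exists q.
clearbody z.
have [z0|z0] := eqVneq z 0; [by left | right].
have [yB [yP [ez hyB hyP]]] := decomp U z.
have jd : (j <= d)%N by rewrite -rU rank_leq_col.
set N := dotp z z.
have N0 : 0 < N := dotp_gt0 z0.
have NE : N = dotp yB yB + dotp yP yP.
  rewrite /N ez !(dotpDl, dotpDr) (dotpC yB yP) (orth_dotp hyP hyB); lra.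
have key : dotp yB yB <= 32 * beta ^+ 2 * N.
  have [yB0|yB0] := eqVneq yB 0.
    by rewrite yB0 dotp0l; have := sqr_ge0 beta; nra.
  have rW := rank_cap_line hyB yB0; rewrite rU in rW.
  have j0 : (0 < j)%N by have := mxrankS hyB; rewrite rank_rV yB0 rU.
  pose W := (U :&: kermx (trmx yB))%MS.
  pose L := [set y | (y - b <= W)%MS].
  have hL : is_plane j.-1 L by exists b, W.
  have Lb : L b by rewrite /L /= subrr sub0mx.
  have jlt : (j.-1 < j)%N by lia.
  have nfl := hmin j.-1 L jlt Lb.
  have [i hi] : exists i, ~ (angle_plane (v i) L <= (beta ^+ j.-1)%:E)%E.
    apply/existsNP => H; apply: nfl; split => // _ [i _ <-]; right; exact: H i.
  set vv := v i.
  have vv1 : dotp vv vv = 1 by rewrite -enorm_sq hvn expr1n.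
  have vv0 : vv != 0.
    by apply/eqP => E; move: vv1; rewrite E dotp0l => /eqP; rewrite eq_sym oner_eq0.
  set s := beta ^+ d; set t := beta ^+ j; set u := beta ^+ j.-1.
  have tu : t = beta * u by rewrite /t /u -exprS prednK.
  have u0 : 0 < u := exprn_gt0 _ b0.
  have u1 : u <= 1 by apply: exprn_ile1; lra.
  have st : s <= t by apply: ler_wiXn2l => //; lra.
  have s0 : 0 <= s := exprn_ge0 _ (ltW b0).
  have s1 : s <= 1 by apply: exprn_ile1; lra.
  have pi2 := @pi_ge2 R; have pih := @pihalf_ge1 R.
  have hA : dotp z vv ^+ 2 <= s ^+ 2 * N.
    have := (hS i).2 z hzS.
    case => [E|ha]; first by move: z0; rewrite E eqxx.
    pose e := z - dotp z vv *: vv.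
    have hc : cos s * enorm z <= enorm e.
      apply: (@angle_le_bound R d z e (Lam i) s _ _ ha); first by apply/andP; split; lra.
      by move=> w hw; rewrite /e (dotpBl z) dotpZl (hvo i w hw) mulr0 subr0.
    have ee : dotp e e = N - dotp z vv ^+ 2.
      rewrite /e !(dotpBl, dotpBr, dotpZl, dotpZr) vv1 (dotpC vv z) -/N; ring.
    have cs0 : 0 <= cos s by apply: cos_ge0_pihalf; apply/andP; split; lra.
    have hsq : cos s ^+ 2 * N <= N - dotp z vv ^+ 2.
      rewrite -ee -enorm_sq -/N -[N]enorm_sq -exprMn.
      have := mulr_ge0 cs0 (enorm_ge0 z); have := enorm_ge0 e; nra.
    have := sin2_le s s0; have := cos2sin2 s; nra.
  have [vB [vP [ev hvB hvP]]] := decomp U vv.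
  have hvBP : dotp vv vv = dotp vB vB + dotp vP vP.
    by rewrite ev !(dotpDl, dotpDr) (dotpC vB vP) (orth_dotp hvP hvB); ring.
  have hB : dotp vP vP <= t ^+ 2.
    have := hflB vv (ex_intro2 _ _ i I erefl).
    case => [E|hb]; first by move: vv0; rewrite E eqxx.
    have t0 : 0 <= t := exprn_ge0 _ (ltW b0).
    have t1 : t <= 1 by rewrite tu; nra.
    have hc : cos t * enorm vv <= enorm vB.
      apply: (@angle_le_bound R d vv vB _ t _ _ hb); first by apply/andP; split; lra.
      move=> w hw; have hw' := proj1 (diffsetP a U w) hw.
      by rewrite ev dotpDl (orth_dotp hvP hw') addr0.
    rewrite hvn mulr1 in hc.
    have ct0 : 0 <= cos t by apply: cos_ge0_pihalf; apply/andP; split; lra.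
    have hsq : cos t ^+ 2 <= dotp vB vB.
      rewrite -enorm_sq; have := enorm_ge0 vB; nra.
    have := sin2_le t t0; have := cos2sin2 t; nra.
  have yy0 := dotp_gt0 yB0.
  pose c := dotp vB yB / dotp yB yB.
  pose w := vB - c *: yB.
  have wx : dotp w yB = 0.
    by rewrite /w dotpBl dotpZl /c divfK ?subrr // gt_eqF.
  have wU : (w <= U)%MS by apply: subB_sub => //; apply: scalemx_sub.
  have ew : vB = w + c *: yB by rewrite /w subrK.
  clearbody w.
  have wW : (w <= W)%MS.
    by rewrite sub_capmx wU /=; apply/sub_kermxP; rewrite mx11_dotp wx raddf0.
  have hC : dotp w w <= cos u ^+ 2.
    have [w0|w0] := eqVneq w 0; first by rewrite w0 dotp0l sqr_ge0.
    have hwL : diffset L w := proj2 (diffsetP b W w) wW.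
    have : dotp vv w < cos u * (enorm vv * enorm w).
      by apply: (@angle_gt_bound R d vv w L u vv0 w0 hwL _ hi); apply/andP; split; lra.
    have -> : dotp vv w = dotp w w.
      rewrite ev dotpDl (orth_dotp hvP wU) addr0.
      rewrite ew.
      by rewrite dotpDl dotpZl (dotpC yB w) wx mulr0 addr0.
    rewrite hvn mul1r -enorm_sq => hlt.
    have nw := enorm_gt0 w0.
    have : enorm w < cos u.
      by rewrite -(ltr_pM2r nw) -expr2.
    nra.
  have hBB : dotp vB vB = c ^+ 2 * dotp yB yB + dotp w w.
    rewrite ew.
    rewrite !(dotpDl, dotpDr, dotpZl, dotpZr) (dotpC yB w) wx; ring.
  have hD : dotp z vv = c * dotp yB yB + dotp yP vP.
    rewrite ez ev !(dotpDl, dotpDr) (dotpC yB vP) (orth_dotp hvP hyB).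
    rewrite (orth_dotp hyP hvB) (dotpC yB vB) /c divfK ?gt_eqF //; ring.
  have hPP := CS2 yP vP.
  have su := sin_lb u; have cu := cos2sin2 u.
  have sul : u / 2 <= sin u by apply: su; apply/andP; split; lra.
  have sul2 : u ^+ 2 / 4 <= sin u ^+ 2.
    have -> : u ^+ 2 / 4 = (u / 2) ^+ 2 by rewrite expr_div_n; congr (_ / _); rewrite expr2 -natrM.
    rewrite ler_sqr ?nnegrE //; lra.
  set X := dotp yB yB in NE hBB hD yy0 *.
  set Y := dotp yP yP in NE hPP *.
  set P := dotp vP vP in hB hPP hvBP *.
  set e := dotp yP vP in hD hPP *.
  have Y0 : 0 <= Y := dotp_ge0 yP.
  have P0 : 0 <= P := dotp_ge0 vP.
  have cX : u ^+ 2 / 8 <= c ^+ 2 * X.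
    have bu : (beta * u) ^+ 2 <= u ^+ 2 / 8.
      rewrite exprMn; have : beta ^+ 2 <= 1 / 8 by nra.
      have := sqr_ge0 u; nra.
    rewrite tu in hB; lra.
  have e2 : e ^+ 2 <= t ^+ 2 * N by nra.
  have st2 : s ^+ 2 <= t ^+ 2 by rewrite ler_sqr ?nnegrE //; lra.
  have cX2 : (c * X) ^+ 2 <= 4 * t ^+ 2 * N.
    have : (c * X) ^+ 2 <= 2 * (c * X + e) ^+ 2 + 2 * e ^+ 2.
      have := sqr_ge0 (c * X + 2 * e); nra.
    rewrite -hD; nra.
  have : u ^+ 2 / 8 * X <= 4 * beta ^+ 2 * u ^+ 2 * N.
    have -> : 4 * beta ^+ 2 * u ^+ 2 * N = 4 * t ^+ 2 * N by rewrite tu; ring.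
    apply: le_trans cX2; have -> : (c * X) ^+ 2 = (c ^+ 2 * X) * X by ring.
    by apply: ler_wpM2r => //; exact: ltW.
  have uu : 0 < u ^+ 2 by rewrite exprn_gt0.
  nra.
have yPN : (1 - 32 * beta ^+ 2) * N <= dotp yP yP by lra.
have yP0 : yP != 0.
  apply/eqP => E; move: yPN; rewrite E dotp0l.
  have : 0 < 1 - 32 * beta ^+ 2 by nra.
  nra.
have yPK : (yP <= K)%MS by apply/sub_kermxP.
apply: le_trans (ereal_inf_lbound _) _.
  exists yP => //; split; last by apply/eqP.
  exact: (proj2 (diffsetP b K yP) yPK).
rewrite lee_fin /vangle.
have zyP : dotp z yP = dotp yP yP.
  by rewrite ez dotpDl (dotpC yB) (orth_dotp hyP hyB) add0r.
have ez' : enorm z = Num.sqrt N by [].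
have nP := enorm_gt0 yP0; have nz := enorm_gt0 z0.
have r_eq : dotp z yP / (enorm z * enorm yP) = enorm yP / enorm z.
  rewrite zyP -enorm_sq; field.
  by rewrite !gt_eqF.
apply: (@le_trans _ _ a') => //.
have rb := ratio_bounds z0 yP0; rewrite r_eq in rb *.
have pi2 := @pi_ge2 R; have pih := @pihalf_ge1 R.
rewrite acos_le_iff //; last by apply/andP; split; lra.
rewrite ler_pdivlMr //.
have c0 : 0 <= cos a' by apply: cos_ge0_pihalf; apply/andP; split; lra.
have sl := @sin_lb R a'; have := cos2sin2 a'.
have sa : a' / 2 <= sin a' by apply: sl; apply/andP; split; lra.
move=> c2.
have hsq : (cos a' * enorm z) ^+ 2 <= enorm yP ^+ 2.
  rewrite exprMn !enorm_sq -/N c2.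
  have : a' ^+ 2 / 4 <= sin a' ^+ 2.
    have -> : a' ^+ 2 / 4 = (a' / 2) ^+ 2 by rewrite expr_div_n; congr (_ / _); rewrite expr2 -natrM.
    rewrite ler_sqr ?nnegrE //; lra.
  rewrite beq; nra.
have X0 : 0 <= cos a' * enorm z by rewrite mulr_ge0 // enorm_ge0.
have Y0 := enorm_ge0 yP.
move: hsq X0 Y0; set X := cos a' * enorm z; set Y := enorm yP; nra.
Qed.
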